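(* Let $f=\frac1n\sum_{i=1}^n f_i$, where each $f_i:\mathbb{R}^d\to\mathbb{R}$ is differentiable, bounded from below with infimum $f_i^{\mathrm{inf}}$, and $L_i$-smooth ($f_i(y)\le f_i(x)+\langle\nabla f_i(x),y-x\rangle+\frac{L_i}{2}\|y-x\|^2$ for all $x,y$); let $f^{\mathrm{inf}}=\inf f$. For each $i$ and $x$, let $g_i(x)$ be a random vector with $\mathbb{E}[g_i(x)]=\nabla f_i(x)$ satisfying, for some constants $A_i,B_i,C_i\ge0$ and all $x$, $$\mathbb{E}\|g_i(x)\|^2\le 2A_i(f_i(x)-f_i^{\mathrm{inf}})+B_i\|\nabla f_i(x)\|^2+C_i.$$ Let $\mathcal{Q}_1,\dots,\mathcal{Q}_n$ be mutually independent random operators, independent of $(g_1(x),\dots,g_n(x))$, with each $\mathcal{Q}_i$ an $\omega_i$-compression operator, and set $g(x)=\frac1n\sum_{i=1}^n\mathcal{Q}_i(g_i(x))$. Then there exist constants $A,B,C\ge 0$ such that for all $x$, $$\mathbb{E}\|g(x)\|^2\le 2A(f(x)-f^{\mathrm{inf}})+B\|\nabla f(x)\|^2+C.$$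
   Context: A random operator $\mathcal{Q}:\mathbb{R}^d\to\mathbb{R}^d$ is an $\omega$-compression operator ($\omega\ge0$) if for every $x\in\mathbb{R}^d$, $\mathbb{E}[\mathcal{Q}(x)]=x$ and $\mathbb{E}\|\mathcal{Q}(x)-x\|^2\le\omega\|x\|^2$. *)

(* Defs.v *)
From HB Require Import structures.
From mathcomp Require Import all_boot all_order all_algebra.
From mathcomp Require Import all_classical all_reals all_analysis.
Set Implicit Arguments. Unset Strict Implicit. Unset Printing Implicit Defensive.
Import Order.TTheory GRing.Theory Num.Theory.
Import numFieldNormedType.Exports.
Local Open Scope classical_set_scope.
Local Open Scope ring_scope.

Definition dotv {R : realType} {d : nat} (u v : 'rV[R]_d) : R :=
  \sum_(k < d) u 0 k * v 0 k.
Definition sqnorm {R : realType} {d : nat} (v : 'rV[R]_d) : R := dotv v v.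

(* gradient of f : R^d -> R at x (the vector representing the Frechet
   derivative 'd f x w.r.t. the standard inner product) *)
Definition grad {R : realType} {d : nat} (f : 'rV[R]_d -> R) (x : 'rV[R]_d)
  : 'rV[R]_d := \row_(k < d) ('d f x) (delta_mx 0 k : 'rV[R]_d).

(* coordinates as a d-tuple (used to put the Borel structure on R^d:
   n.-tuple R carries the product (coordinate) sigma-algebra) *)
Definition rv_of_tuple {R : realType} {d : nat} (t : d.-tuple R) : 'rV[R]_d :=
  \row_(k < d) tnth t k.

Definition sigma_of {dT} {T : measurableType dT} {R : realType} {I : Type}
  (X : I -> T -> R) : set (set T) :=
  <<s [set A | exists i (B : set R), measurable B /\ A = X i @^-1` B] >>.

Definition mutually_independent {dT} {T : measurableType dT} {R : realType}
  (P : probability T R) {I : finType} (F : I -> set (set T)) : Prop :=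
  forall (J : {set I}) (A : I -> set T),
    (forall j, j \in J -> F j (A j)) ->
    P (\bigcap_(j in [set j | j \in J]) A j) = (\prod_(j in J) P (A j))%E.

Definition finf {R : realType} {d : nat} (f : 'rV[R]_d -> R) : R := inf (range f).

(* Main.v *)
Require Import Defs.
From HB Require Import structures.
From mathcomp Require Import all_boot all_order all_algebra.
From mathcomp Require Import all_classical all_reals all_analysis.
From mathcomp Require Import measurable_realfun.
From mathcomp Require Import ring lra.
Import Order.TTheory GRing.Theory Num.Theory.
Import numFieldNormedType.Exports.
Local Open Scope classical_set_scope.
Local Open Scope ring_scope.

Lemma sqnorm_ge0 (R : realType) d (v : 'rV[R]_d) : 0 <= sqnorm v.
Proof. by apply: sumr_ge0 => k _; exact: sqr_ge0. Qed.

Lemma sqnorm_tri (R : realType) d (a b : 'rV[R]_d) :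
  sqnorm a <= 2 * sqnorm (a - b) + 2 * sqnorm b.
Proof.
rewrite /sqnorm /dotv !mulr_sumr -big_split /=; apply: ler_sum => k _.
rewrite !mxE; have := sqr_ge0 (a 0 k - 2 * b 0 k); nra.
Qed.

Lemma sqnorm_scale (R : realType) d (a : R) (v : 'rV[R]_d) :
  sqnorm (a *: v) = a ^+ 2 * sqnorm v.
Proof.
rewrite /sqnorm /dotv mulr_sumr; apply: eq_bigr => k _; rewrite !mxE; ring.
Qed.

Lemma sqr_sum_le (R : realType) n (a : 'I_n -> R) :
  (\sum_(i < n) a i) ^+ 2 <= n%:R * \sum_(i < n) a i ^+ 2.
Proof.
rewrite expr2 mulr_suml.
under eq_bigr do rewrite mulr_sumr.
have H : forall i j, a i * a j <= (a i ^+ 2 + a j ^+ 2) / 2.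
  by move=> i j; have := sqr_ge0 (a i - a j); nra.
apply: (le_trans (ler_sum _ (fun i _ => ler_sum _ (fun j _ => H i j)))).
under eq_bigr do rewrite -mulr_suml big_split /=.
rewrite -mulr_suml big_split /= sumr_const card_ord.
rewrite -(exchange_big) /= sumr_const card_ord.
set s := \sum_(i < n) _.
rewrite -mulr_natr [n%:R * _]mulrC; lra.
Qed.

Lemma sqnorm_sum_le (R : realType) n d (v : 'I_n -> 'rV[R]_d) :
  sqnorm (\sum_(i < n) v i) <= n%:R * \sum_(i < n) sqnorm (v i).
Proof.
rewrite /sqnorm /dotv exchange_big mulr_sumr /=; apply: ler_sum => k _.
rewrite summxE -expr2.
under [X in _ <= _ * X]eq_bigr do rewrite -expr2.
exact: sqr_sum_le.
Qed.

Lemma dotv_scale (R : realType) d (a : R) (v : 'rV[R]_d) :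
  dotv v (a *: v) = a * sqnorm v.
Proof.
rewrite /sqnorm /dotv mulr_sumr; apply: eq_bigr => k _; rewrite !mxE; ring.
Qed.

Lemma grad_bound (R : realType) d (f : 'rV[R]_d -> R) (x v : 'rV[R]_d) (L m : R) :
  (forall y, f y <= f x + dotv v (y - x) + L / 2 * sqnorm (y - x)) ->
  (forall y, m <= f y) ->
  sqnorm v <= 2 * Num.max L 1 * (f x - m).
Proof.
move=> H Hm.
set Lp := Num.max L 1.
have Lp1 : 1 <= Lp by rewrite le_max lexx orbT.
have LLp : L <= Lp by rewrite le_max lexx.
have Lp0 : 0 < Lp by apply: lt_le_trans Lp1.
set t := Lp^-1.
have t0 : 0 < t by rewrite invr_gt0.
have tLp : t * Lp = 1 by rewrite mulVf // gt_eqF.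
set s := sqnorm v.
have s0 : 0 <= s by exact: sqnorm_ge0.
have := H (x + (- t) *: v).
have E : x + (- t) *: v - x = (- t) *: v by rewrite addrAC subrr add0r.
rewrite E dotv_scale sqnorm_scale -/s => H1.
have H2 := Hm (x + (- t) *: v).
have H3 : L / 2 * (- t) ^+ 2 * s <= Lp / 2 * (- t) ^+ 2 * s.
  apply: ler_wpM2r => //; apply: ler_wpM2r; first by rewrite sqr_ge0.
  by rewrite ler_pM2r.
have H4 : Lp / 2 * (- t) ^+ 2 * s = t * s / 2.
  rewrite sqrrN expr2; transitivity ((t * Lp) * t * s / 2); first by ring.
  by rewrite tLp mul1r.
have H5 : t * s <= 2 * (f x - m) by nra.
have -> : s = Lp * (t * s) by rewrite mulrA [Lp * t]mulrC tLp mul1r.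
rewrite -mulrA [2 * _]mulrC -mulrA ler_pM2l //.
by rewrite mulrC.
Qed.

Section KS.
Local Open Scope ereal_scope.
Lemma indep_fubini (R : realType) dT (T : measurableType dT) (P : probability T R)
  (S : set (set T)) dU (U : measurableType dU) (Y : T -> U)
  (hS : forall A, <<s S>> A -> measurable A)
  (mY : measurable_fun setT Y)
  (ind : forall A B, <<s S>> A -> measurable B ->
     P (A `&` Y @^-1` B) = P A * P (Y @^-1` B))
  (h : g_sigma_algebraType S * U -> \bar R)
  (mh : measurable_fun [set: (g_sigma_algebraType S * U)%type] h) (h0 : forall z, 0 <= h z)
  (c : U -> \bar R) (mc : measurable_fun setT c) (c0 : forall u, 0 <= c u)
  (hc : forall u, \int[P]_v h (v, u) <= c u) :
  \int[P]_w h (w, Y w) <= \int[P]_w c (Y w).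
Proof.
have mi : measurable_fun setT (fun w : T => (w : g_sigma_algebraType S)).
  by move=> _ A mA; rewrite setTI; exact: hS.
pose iota : {mfun T >-> g_sigma_algebraType S} :=
  HB.pack (fun w : T => (w : g_sigma_algebraType S)) (isMeasurableFun.Build _ _ _ _ _ mi).
pose Ym : {mfun T >-> U} := HB.pack Y (isMeasurableFun.Build _ _ _ _ _ mY).
pose m1 := distribution P iota.
pose m2 := distribution P Ym.
have mphi : measurable_fun setT (fun w => (iota w, Ym w)).
  exact: measurable_fun_pair.
have E1 : \int[P]_w h (w, Y w) = \int[pushforward P (fun w => (iota w, Ym w))]_z h z.
  rewrite ge0_integral_pushforward//.
rewrite E1.
have E2 : \int[pushforward P (fun w : T => (iota w, Ym w))]_z h z = \int[m1 \x m2]_z h z.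
  apply: eq_measure_integral => X mX _.
  apply/esym; apply: product_measure_unique => [A B mA mB|//].
  rewrite /pushforward /distribution /pushforward /=.
  by rewrite -ind.
rewrite E2 fubini_tonelli2//.
have -> : \int[P]_w c (Y w) = \int[m2]_u c u.
  by rewrite ge0_integral_distribution.
apply: ge0_le_integral => //.
- by move=> u _; apply: integral_ge0 => v _.
- exact: measurable_fun_fubini_tonelli_G.
move=> u _.
rewrite /fubini_G ge0_integral_distribution//; last exact: measurable_fun_pair1.
exact: hc.
Qed.

End KS.

Lemma rv_mktuple (R : realType) d (y : 'rV[R]_d) :
  rv_of_tuple (mktuple (fun k => y 0 k)) = y.
Proof. by apply/rowP => k; rewrite /rv_of_tuple mxE tnth_mktuple. Qed.

Lemma measurable_sqnorm (R : realType) dT (T : measurableType dT) d (u : T -> 'rV[R]_d) :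
  (forall k, measurable_fun setT (fun w => u w 0 k)) ->
  measurable_fun setT (fun w => sqnorm (u w)).
Proof.
move=> mu; rewrite /sqnorm /dotv.
apply: measurable_sum => k; exact: measurable_funM.
Qed.

Theorem proposition4
  (R : realType) (n d : nat)
  (dT : measure_display) (T : measurableType dT) (P : probability T R)
  (f : 'I_n -> 'rV[R]_d -> R) (L A B C om : 'I_n -> R)
  (g : 'I_n -> 'rV[R]_d -> T -> 'rV[R]_d)
  (Q : 'I_n -> T -> 'rV[R]_d -> 'rV[R]_d)
  (F : 'I_n -> set (set T)) :
  (forall i x, differentiable (f i) x) ->
  (forall i, has_lbound (range (f i))) ->
  (forall i x y, f i y <= f i x + dotv (grad (f i) x) (y - x)
                          + L i / 2 * sqnorm (y - x)) ->
  (forall i x k, measurable_fun setT (fun w => g i x w 0 k)) ->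
  (forall i x k, P.-integrable setT (fun w => (g i x w 0 k)%:E) /\
     (\int[P]_w (g i x w 0 k)%:E = (grad (f i) x 0 k)%:E)%E) ->
  (forall i, 0 <= A i /\ 0 <= B i /\ 0 <= C i) ->
  (forall i x, (\int[P]_w (sqnorm (g i x w))%:E <=
     (2 * A i * (f i x - finf (f i)) + B i * sqnorm (grad (f i) x) + C i)%:E)%E) ->
  (forall i A0, F i A0 -> measurable A0) ->
  (forall i k, measurable_fun setT
     (fun p : g_sigma_algebraType (F i) * (d.-tuple R) =>
        Q i p.1 (rv_of_tuple p.2) 0 k)) ->
  (forall i, 0 <= om i) ->
  (forall i y k, P.-integrable setT (fun w => (Q i w y 0 k)%:E) /\
     (\int[P]_w (Q i w y 0 k)%:E = (y 0 k)%:E)%E) ->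
  (forall i y, (\int[P]_w (sqnorm (Q i w y - y))%:E <= (om i * sqnorm y)%:E)%E) ->
  (forall x, mutually_independent P
     (fun j : option 'I_n => match j with
        | None => sigma_of (fun ik : 'I_n * 'I_d => fun w => g ik.1 x w 0 ik.2)
        | Some i => <<s F i >>
        end)) ->
  let fbar := fun x => n%:R^-1 * \sum_(i < n) f i x in
  let gQ := fun x w => n%:R^-1 *: \sum_(i < n) Q i w (g i x w) in
  exists A0 B0 C0 : R, 0 <= A0 /\ 0 <= B0 /\ 0 <= C0 /\
    forall x, (\int[P]_w (sqnorm (gQ x w))%:E <=
      (2 * A0 * (fbar x - finf fbar) + B0 * sqnorm (grad fbar x) + C0)%:E)%E.
Proof.
move=> fdiff flb smooth gmeas gint ABC0 gbound Fmeas Qmeas om0 Qint Qbound indep fbar gQ.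
pose Lp i := Num.max (L i) 1.
have Lp1 i : 1 <= Lp i by rewrite le_max lexx orbT.
pose K i := 2 * (1 + om i) * (2 * A i + 2 * B i * Lp i).
pose D i := 2 * (1 + om i) * C i.
pose Ks := \sum_(i < n) K i.
pose infs := \sum_(i < n) finf (f i).
pose C0 := Ks * Num.max 0 (finf fbar - n%:R^-1 * infs) + n%:R^-1 * \sum_(i < n) D i.
have om1 i : 0 <= 1 + om i by rewrite addr_ge0.
have K0 i : 0 <= K i.
  have [a0 [b0 c0]] := ABC0 i.
  rewrite /K; apply: mulr_ge0; first by apply: mulr_ge0.
  apply: addr_ge0; first by apply: mulr_ge0.
  by apply: mulr_ge0; [apply: mulr_ge0|apply: le_trans (Lp1 i)].
have D0 i : 0 <= D i.
  have [a0 [b0 c0]] := ABC0 i.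
  by rewrite /D; apply: mulr_ge0; first by apply: mulr_ge0.
have Ks0 : 0 <= Ks by apply: sumr_ge0.
have n0 : 0 <= n%:R^-1 :> R by rewrite invr_ge0 ler0n.
exists (Ks / 2), 0, C0.
split; first by apply: divr_ge0.
split; first by [].
split.
  rewrite /C0; apply: addr_ge0; first by apply: mulr_ge0 => //; rewrite le_max lexx.
  by apply: mulr_ge0 => //; apply: sumr_ge0.
move=> x.
have inf_le i y : finf (f i) <= f i y.
  by apply: (ge_inf (flb i)); exists y.
pose Yt i := fun w => [tuple g i x w 0 k | k < d].
have mYt i : measurable_fun setT (Yt i).
  apply/measurable_fun_tnthP => k.
  have -> : (tnth (T:=R))^~ k \o Yt i = (fun w => g i x w 0 k).
    by apply/funext => w; rewrite /= tnth_mktuple.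
  exact: gmeas.
have rvY i w : rv_of_tuple (Yt i w) = g i x w by exact: rv_mktuple.
have mi i : measurable_fun setT (fun w : T => (w : g_sigma_algebraType (F i))).
  move=> _ A0 mA; rewrite setTI.
  by apply: smallest_sub A0 mA => //; [exact: sigma_algebra_measurable|exact: Fmeas].
have mQg i k : measurable_fun setT (fun w => Q i w (g i x w) 0 k).
  have -> : (fun w => Q i w (g i x w) 0 k) =
     (fun p : g_sigma_algebraType (F i) * (d.-tuple R) => Q i p.1 (rv_of_tuple p.2) 0 k)
     \o (fun w => ((w : g_sigma_algebraType (F i)), Yt i w)).
    by apply/funext => w /=; rewrite rvY.
  apply: measurableT_comp; first exact: Qmeas.
  exact: measurable_fun_pair.
have Hi i : (\int[P]_w (sqnorm (Q i w (g i x w)))%:E <=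
     (K i * (f i x - finf (f i)) + D i)%:E)%E.
  have gb : sqnorm (grad (f i) x) <= 2 * Lp i * (f i x - finf (f i)).
    by apply: grad_bound => [y|y]; [exact: smooth|exact: inf_le].
  have hS : forall A0, <<s F i >> A0 -> measurable A0.
    by move=> A0; apply: smallest_sub => //; [exact: sigma_algebra_measurable|exact: Fmeas].
  have ind : forall A0 B0, <<s F i >> A0 -> measurable B0 ->
      P (A0 `&` Yt i @^-1` B0) = (P A0 * P (Yt i @^-1` B0))%E.
    move=> A0 B0 sA mB.
    pose G0 := [set A1 | exists (ik : 'I_n * 'I_d) (B1 : set R),
        measurable B1 /\ A1 = (fun w => g ik.1 x w 0 ik.2) @^-1` B1].
    have sY : sigma_of (fun ik : 'I_n * 'I_d => fun w => g ik.1 x w 0 ik.2) (Yt i @^-1` B0).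
      have mY' : measurable_fun (setT : set (g_sigma_algebraType G0))
          (Yt i : g_sigma_algebraType G0 -> d.-tuple R).
        apply/measurable_fun_tnthP => k _ C1 mC; rewrite setTI; apply: sub_sigma_algebra.
        exists (i, k), C1; split => //.
        by apply/funext => w /=; rewrite /preimage /= tnth_mktuple.
      by have := mY' measurableT B0 mB; rewrite setTI.
    have := indep x ([set Some i; None])%SET
      (fun j => if j is Some _ then A0 else Yt i @^-1` B0).
    have Hj : forall j, j \in ([set Some i; None])%SET ->
        (match j with
         | None => sigma_of (fun ik : 'I_n * 'I_d => fun w => g ik.1 x w 0 ik.2)
         | Some i0 => <<s F i0 >>
         end) (if j is Some _ then A0 else Yt i @^-1` B0).
      move=> [j|] //; rewrite !inE => /orP[/eqP [->] //|//].
    move=> /(_ Hj).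
    have -> : \bigcap_(j in [set j | j \in ([set Some i; None])%SET])
        (if j is Some _ then A0 else Yt i @^-1` B0) = A0 `&` Yt i @^-1` B0.
      apply/seteqP; split => w.
        move=> H; split; [apply: (H (Some i)) | apply: (H None)];
          by rewrite /= !inE eqxx ?orbT.
      by move=> [a b] [j|] /=.
    by rewrite big_setU1 /= ?big_set1 // ?inE.
  have mh : measurable_fun [set: (g_sigma_algebraType (F i) * d.-tuple R)%type]
      (fun p : g_sigma_algebraType (F i) * d.-tuple R => (sqnorm (Q i p.1 (rv_of_tuple p.2)))%:E).
    apply/measurable_EFinP; apply: measurable_sqnorm => k; exact: Qmeas.
  have mc : measurable_fun [set: d.-tuple R]
      (fun u : d.-tuple R => (2 * (1 + om i) * sqnorm (rv_of_tuple u))%:E).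
    apply/measurable_EFinP; apply: measurable_funM => //.
    apply: measurable_sqnorm => k.
    have -> : (fun u : d.-tuple R => rv_of_tuple u 0 k) = (fun u => tnth u k).
      by apply/funext => u; rewrite mxE.
    exact: measurable_tnth.
  have hc : forall u : d.-tuple R, (\int[P]_v (sqnorm (Q i v (rv_of_tuple u)))%:E <=
      (2 * (1 + om i) * sqnorm (rv_of_tuple u))%:E)%E.
    move=> u; set y := rv_of_tuple u.
    have mQy k : measurable_fun setT (fun v => Q i v y 0 k).
      exact: (measurableT_comp (measurable_fun_pair1 u (Qmeas i k)) (mi i)).
    have m1 : measurable_fun setT (fun v => (sqnorm (Q i v y))%:E).
      by apply/measurable_EFinP; apply: measurable_sqnorm.
    have m2 : measurable_fun setT (fun v => (sqnorm (Q i v y - y))%:E).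
      apply/measurable_EFinP; apply: measurable_sqnorm => k.
      have -> : (fun v => (Q i v y - y) 0 k) = (fun v => Q i v y 0 k - y 0 k).
        by apply/funext => v; rewrite !mxE.
      by apply: measurable_funB.
    apply: (@le_trans _ _ (\int[P]_v ((2%:E * (sqnorm (Q i v y - y))%:E) + (2 * sqnorm y)%:E))%E).
      apply: ge0_le_integral => //.
      - by move=> v _; rewrite lee_fin sqnorm_ge0.
      - apply: emeasurable_funD => //; apply: emeasurable_funM => //.
      - by move=> v _; rewrite -EFinM -EFinD lee_fin sqnorm_tri.
    rewrite ge0_integralD//; last first.
    - by move=> v _; rewrite lee_fin mulr_ge0 ?sqnorm_ge0.
    - by apply: emeasurable_funM.
    - by move=> v _; rewrite -EFinM lee_fin mulr_ge0 ?sqnorm_ge0.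
    rewrite (ge0_integralZl _ _ m2)//; last by move=> v _; rewrite lee_fin sqnorm_ge0.
    rewrite integral_cst//.
    have P1 := @probability_setT _ _ _ P.
    rewrite [X in (_ + _ * X)%E](_ : _ = 1%E); last exact: P1.
    rewrite mule1.
    apply: le_trans.
      by apply: leeD2r; apply: lee_wpmul2l; [rewrite lee_fin|exact: Qbound].
    rewrite -EFinM -EFinD lee_fin.
    have -> : 2 * (1 + om i) * sqnorm y = 2 * (om i * sqnorm y) + 2 * sqnorm y by ring.
    by [].
  have h0 : forall p : g_sigma_algebraType (F i) * d.-tuple R,
      (0 <= (sqnorm (Q i p.1 (rv_of_tuple p.2)))%:E)%E.
    by move=> p; rewrite lee_fin sqnorm_ge0.
  have c0 : forall u : d.-tuple R, (0 <= (2 * (1 + om i) * sqnorm (rv_of_tuple u))%:E)%E.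
    by move=> u; rewrite lee_fin; apply: mulr_ge0; [apply: mulr_ge0|apply: sqnorm_ge0].
  have := @indep_fubini R dT T P (F i) _ _ (Yt i) hS (mYt i) ind _ mh h0 _ mc c0 hc.
  have E1 : (\int[P]_w (sqnorm (Q i (w, Yt i w).1 (rv_of_tuple (w, Yt i w).2)))%:E =
      \int[P]_w (sqnorm (Q i w (g i x w)))%:E)%E.
    by apply: eq_integral => w _; rewrite /= rvY.
  have E2 : (\int[P]_w (2 * (1 + om i) * sqnorm (rv_of_tuple (Yt i w)))%:E =
      (2 * (1 + om i))%:E * \int[P]_w (sqnorm (g i x w))%:E)%E.
    have -> : (\int[P]_w (2 * (1 + om i) * sqnorm (rv_of_tuple (Yt i w)))%:E =
        \int[P]_w ((2 * (1 + om i))%:E * (sqnorm (g i x w))%:E))%E.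
      by apply: eq_integral => w _; rewrite rvY EFinM.
    have mg : measurable_fun setT (fun w => (sqnorm (g i x w))%:E).
      by apply/measurable_EFinP; apply: measurable_sqnorm => k; exact: gmeas.
    rewrite (ge0_integralZl _ _ mg)//.
    - by move=> w _; rewrite lee_fin sqnorm_ge0.
    - by rewrite lee_fin; apply: mulr_ge0.
  rewrite E1 E2 => H; apply: (le_trans H).
  apply: le_trans; first by apply: lee_wpmul2l; [rewrite lee_fin; apply: mulr_ge0|exact: gbound].
  rewrite -EFinM lee_fin.
  have [a0 [b0 c0']] := ABC0 i.
  have Bs : B i * sqnorm (grad (f i) x) <= B i * (2 * Lp i * (f i x - finf (f i))).
    by apply: ler_wpM2l.
  have -> : K i * (f i x - finf (f i)) + D i = 2 * (1 + om i) *
      (2 * A i * (f i x - finf (f i)) + B i * (2 * Lp i * (f i x - finf (f i))) + C i).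
    by rewrite /K /D; ring.
  apply: ler_wpM2l; first by apply: mulr_ge0.
  by rewrite lerD2r lerD2l.
have mS i : measurable_fun setT (fun w => sqnorm (Q i w (g i x w))).
  by apply: measurable_sqnorm => k; exact: mQg.
have RHSE : (fun w => ((n%:R^-1)%:E * \sum_(i < n) (sqnorm (Q i w (g i x w)))%:E)%E) =
    (fun w => (n%:R^-1 * \sum_(i < n) sqnorm (Q i w (g i x w)))%:E).
  by apply/funext => w; rewrite sumEFin -EFinM.
apply: (@le_trans _ _ (\int[P]_w ((n%:R^-1)%:E * \sum_(i < n) (sqnorm (Q i w (g i x w)))%:E))%E).
  apply: ge0_le_integral => //.
  - by move=> w _; rewrite lee_fin sqnorm_ge0.
  - apply/measurable_EFinP; apply: measurable_sqnorm => k.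
    have -> : (fun w => gQ x w 0 k) = (fun w => n%:R^-1 * \sum_(i < n) Q i w (g i x w) 0 k).
      by apply/funext => w; rewrite /gQ !mxE summxE.
    apply: measurable_funM => //; apply: measurable_sum => i; exact: mQg.
  - rewrite RHSE; apply/measurable_EFinP; apply: measurable_funM => //.
    by apply: measurable_sum => i; exact: mS.
  - move=> w _; rewrite sumEFin -EFinM lee_fin /gQ sqnorm_scale.
    have [->|n0'] := eqVneq (n%:R : R) 0.
      by rewrite invr0 expr0n /= !mul0r.
    apply: (le_trans (ler_wpM2l (sqr_ge0 _) (sqnorm_sum_le _ _ _ _))).
    by rewrite mulrA expr2 -mulrA mulrA mulfVK.
have mSum : measurable_fun setT (fun w => (\sum_(i < n) (sqnorm (Q i w (g i x w)))%:E)%E).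
  by apply: emeasurable_sum => i; apply/measurable_EFinP; exact: mS.
rewrite (ge0_integralZl _ _ mSum)//; last first.
  by move=> w _; apply: sume_ge0 => i _; rewrite lee_fin sqnorm_ge0.
rewrite ge0_integral_sum//; last 2 first.
- by move=> i; apply/measurable_EFinP; exact: mS.
- by move=> i w _; rewrite lee_fin sqnorm_ge0.
apply: le_trans.
  by apply: lee_wpmul2l; [rewrite lee_fin|apply: lee_sum => i _; exact: Hi].
rewrite sumEFin -EFinM lee_fin.
have S1 : \sum_(i < n) (K i * (f i x - finf (f i)) + D i) <=
    Ks * (\sum_(i < n) f i x - infs) + \sum_(i < n) D i.
  rewrite big_split /= lerD2r /infs -sumrB mulr_sumr.
  apply: ler_sum => i _; apply: ler_wpM2r; first by rewrite subr_ge0.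
  rewrite /Ks (bigD1 i) //= lerDl; apply: sumr_ge0 => j _; exact: K0.
apply: (le_trans (ler_wpM2l n0 S1)).
have M : Ks * (finf fbar - n%:R^-1 * infs) <= Ks * Num.max 0 (finf fbar - n%:R^-1 * infs).
  by apply: ler_wpM2l => //; rewrite le_max lexx orbT.
rewrite /C0 /fbar.
move: M; set ni := n%:R^-1; set SF := \sum_(i < n) f i x; set SD := \sum_(i < n) D i.
set fi := finf _; set mx := Num.max _ _.
move=> M; nra.
Qed.
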